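(* Let $N\ge 3$ and consider a smooth field $u:\mathbb{R}^N\to\mathbb{R}$ with $t_1=x$ the space variable, and a hierarchy of evolutionary equations \[ u_{t_i}=Q_i(u_1,u_{11},\ldots),\qquad i=2,\ldots,N, \] where $Q_i$ depends only on $t_1$-derivatives of $u$. Let $L_{1i}$, $i=2,\ldots,N$, be Lagrangians of the form \[ L_{1i}[u]=p(u,u_1,u_{11},\ldots)\,u_{t_i}-h_i(u,u_1,u_{11},\ldots), \] with the same function $p$ for all $i$, whose Euler–Lagrange equations $\frac{\delta_{1i}L_{1i}}{\delta u}=0$ are of the form $\mathcal{E}_p(u_{t_i}-Q_i)=0$ for some differential operator $\mathcal{E}_p$. Assume that the prolonged vector fields $\mathfrak{D}_i=\mathrm{pr}(Q_i\partial_u)$, $i=2,\ldots,N$, commute pairwise and are variational symmetries of the Lagrangians, i.e. for all $i\ne j$ in $\{2,\ldots,N\}$ \[ \mathfrak{D}_i L_{1j}=\mathrm{D}_1A_{ij}+\mathrm{D}_jB_{ij} \] for some functions $A_{ij},B_{ij}:\mathcal{J}^\infty\to\mathbb{R}$. Then for all $i\ne j$ in $\{2,\ldots,N\}$ there exist functions $F_{ij}:\mathcal{J}^\infty\to\mathbb{R}$ of the form $F_{ij}=F_{ij}(u,u_1,u_{11},\ldots)$ (not depending on any time derivatives) such that \[ \mathrm{D}_1F_{ij}=\mathrm{D}_iL_{1j}-\mathrm{D}_jL_{1i} \] on solutions of the hierarchy.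
   Context: Subscripts $1,11,\ldots$ denote derivatives with respect to $t_1$ (e.g. $u_{11}=\partial^2u/\partial t_1^2$), and $u_{t_i}$ the derivative with respect to $t_i$. $\mathcal{J}^\infty$ denotes the fiber of the infinite jet bundle, with coordinates all partial derivatives $u_I$ of $u$, $I\in\mathbb{N}^N$ a multi-index. Total derivatives: $\mathrm{D}_i=\sum_I u_{It_i}\partial/\partial u_I$, $\mathrm{D}_I=\mathrm{D}_1^{i_1}\cdots\mathrm{D}_N^{i_N}$. For $Q:\mathcal{J}^\infty\to\mathbb{R}$, the prolongation is $\mathrm{pr}(Q\partial_u)=\sum_I(\mathrm{D}_IQ)\,\partial/\partial u_I$. The variational derivative in the $(t_i,t_j)$-plane is $\frac{\delta_{ij}L}{\delta u_I}=\sum_{\alpha,\beta\ge0}(-1)^{\alpha+\beta}\mathrm{D}_i^\alpha\mathrm{D}_j^\beta\big(\partial L/\partial u_{It_i^\alpha t_j^\beta}\big)$. *)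

(* Defs.v *)
From Stdlib Require Import Reals List Arith.
From Coquelicot Require Import Coquelicot.
Import ListNotations.
Open Scope R_scope.

(* A multi-index I in N^N is a list of naturals of length N;
   position k (0-based) counts derivatives w.r.t. t_{k+1}.  So position 0
   is t_1 = x, and the paper's t_i (i = 2..N) is position i-1.          *)
Definition MI := list nat.
Definition MI_eq_dec : forall I K : MI, {I = K} + {I <> K} :=
  list_eq_dec Nat.eq_dec.

(* a point of the fiber J^infty : the value of every coordinate u_I *)
Definition J := MI -> R.

Fixpoint incr (k : nat) (I : MI) : MI :=
  match I, k with
  | nil, _ => nil
  | a :: l, O => S a :: l
  | a :: l, S k' => a :: incr k' l
  end.

Definition zeroMI (N : nat) : MI := repeat 0%nat N.
(* the multi-index of the coordinate u_{t_k} (k 0-based) *)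
Definition eMI (N k : nat) : MI := incr k (zeroMI N).

Definition xonly (N : nat) (I : MI) : Prop :=
  length I = N /\ forall k, (0 < k)%nat -> nth k I 0%nat = 0%nat.

Definition upd (v : J) (I : MI) (s : R) : J :=
  fun K => if MI_eq_dec K I then s else v K.

Definition pd (I : MI) (f : J -> R) : J -> R :=
  fun v => Derive (fun s => f (upd v I s)) (v I).

Fixpoint iter_pd (l : list MI) (f : J -> R) : J -> R :=
  match l with nil => f | K :: l0 => pd K (iter_pd l0 f) end.

(* A (candidate) differential function: a finite list of coordinates it
   may depend on, together with the function on J^infty. *)
Record DF := mkDF { supp : list MI ; fn : J -> R }.

Definition cont_on (S : list MI) (g : J -> R) : Prop :=
  forall v eps, 0 < eps -> exists delta, 0 < delta /\
    forall w, (forall I, In I S -> Rabs (w I - v I) < delta) ->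
      Rabs (g w - g v) < eps.

Definition smooth_on (S : list MI) (f : J -> R) : Prop :=
  forall l : list MI,
    (forall I v, ex_derive (fun s => iter_pd l f (upd v I s)) (v I)) /\
    cont_on S (iter_pd l f).

Definition is_dfun (N : nat) (F : DF) : Prop :=
  List.Forall (fun I => length I = N) (supp F) /\
  (forall v w, (forall I, In I (supp F) -> v I = w I) -> fn F v = fn F w) /\
  smooth_on (supp F) (fn F).

Definition sumL (l : list MI) (g : MI -> R) : R :=
  fold_right (fun I acc => g I + acc) 0 (nodup MI_eq_dec l).

Definition coordF (K : MI) : DF := mkDF (K :: nil) (fun v => v K).
Definition addDF (F G : DF) : DF := mkDF (supp F ++ supp G) (fun v => fn F v + fn G v).
Definition subDF (F G : DF) : DF := mkDF (supp F ++ supp G) (fun v => fn F v - fn G v).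
Definition mulDF (F G : DF) : DF := mkDF (supp F ++ supp G) (fun v => fn F v * fn G v).
Definition pdF (I : MI) (F : DF) : DF := mkDF (supp F) (pd I (fn F)).

Definition Dt (k : nat) (F : DF) : DF :=
  mkDF (supp F ++ map (incr k) (supp F))
       (fun v => sumL (supp F) (fun I => v (incr k I) * pd I (fn F) v)).

(* D_I = D_1^{i_1} ... D_N^{i_N} *)
Fixpoint Dmulti_aux (k : nat) (I : MI) (F : DF) : DF :=
  match I with
  | nil => F
  | a :: l => Dmulti_aux (S k) l (Nat.iter a (Dt k) F)
  end.
Definition Dmulti (I : MI) (F : DF) : DF := Dmulti_aux 0 I F.

(* prolongation pr(Q d_u) = sum_I (D_I Q) d/du_I *)
Definition prD (Q F : DF) : DF :=
  mkDF (supp F ++ concat (map (fun I => supp (Dmulti I Q)) (supp F)))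
       (fun v => sumL (supp F) (fun I => fn (Dmulti I Q) v * pd I (fn F) v)).

(* a linear differential operator  E = sum_K a_K D_K *)
Definition DOp := list (MI * DF).
Definition applyOp (E : DOp) (G : DF) : DF :=
  mkDF (concat (map (fun p => supp (snd p) ++ supp (Dmulti (fst p) G)) E))
       (fun v => fold_right (fun p acc => fn (snd p) v * fn (Dmulti (fst p) G) v + acc) 0 E).

Definition is_DOp (N : nat) (E : DOp) : Prop :=
  List.Forall (fun p => length (fst p) = N /\ is_dfun N (snd p)) E.

(* variational derivative delta_{ij} L / delta u in the (t_i,t_j)-plane
   (0-based i j).  The infinite sum over alpha, beta is truncated at the
   maximal total order M of the coordinates L depends on; all further
   terms vanish identically. *)
Definition ordMI (I : MI) : nat := fold_right Nat.add 0%nat I.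
Definition maxord (F : DF) : nat := fold_right (fun I m => Nat.max (ordMI I) m) 0%nat (supp F).
Definition sumN (M : nat) (g : nat -> R) : R :=
  fold_right (fun a acc => g a + acc) 0 (seq 0 (S M)).

Definition varder (N i j : nat) (L : DF) : J -> R :=
  fun v => let M := maxord L in
    sumN M (fun a => sumN M (fun b =>
      (-1) ^ (a + b) *
      fn (Nat.iter a (Dt i) (Nat.iter b (Dt j)
            (pdF (Nat.iter a (incr i) (Nat.iter b (incr j) (zeroMI N))) L))) v)).

(* the Lagrangian L_{1i} = p u_{t_i} - h_i  (i 0-based, 1 <= i < N) *)
Definition Lag (N : nat) (p h : DF) (i : nat) : DF :=
  subDF (mulDF p (coordF (eMI N i))) h.

(* v lies on the (infinitely prolonged) solution set of the hierarchy
   u_{t_i} = Q_i, i = 1..N-1 (0-based): u_{I t_i} = D_I Q_i for all I *)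
Definition on_shell (N : nat) (Q : nat -> DF) (v : J) : Prop :=
  forall I : MI, length I = N -> forall i, (1 <= i < N)%nat ->
    v (incr i I) = fn (Dmulti I (Q i)) v.

(* Main.v *)
Require Import Defs.
From Stdlib Require Import Reals List Arith Lia Lra Permutation FunctionalExtensionality.
From Coquelicot Require Import Coquelicot.
Import ListNotations.
Open Scope R_scope.

Definition fr (g : MI -> R) (l : list MI) : R := fold_right (fun I acc => g I + acc) 0 l.

Lemma fr_perm g l1 l2 : Permutation l1 l2 -> fr g l1 = fr g l2.
Proof. induction 1; unfold fr in *; simpl in *; lra. Qed.

Definition nzb (g : MI -> R) (I : MI) : bool := if Req_dec_T (g I) 0 then false else true.

Lemma fr_filter g l : fr g l = fr g (filter (nzb g) l).
Proof.
  induction l as [|a l IH]; simpl; auto.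
  case_eq (nzb g a); intro E; unfold fr in *; simpl; rewrite IH; [lra|].
  unfold nzb in E; destruct (Req_dec_T (g a) 0) as [e|e]; [rewrite e; lra|discriminate].
Qed.

Lemma sumL_eq l1 l2 g : (forall I, g I <> 0 -> (In I l1 <-> In I l2)) -> sumL l1 g = sumL l2 g.
Proof.
  intros H. unfold sumL. change (fr g (nodup MI_eq_dec l1) = fr g (nodup MI_eq_dec l2)).
  rewrite (fr_filter g (nodup _ l1)), (fr_filter g (nodup _ l2)).
  apply fr_perm, NoDup_Permutation; try apply NoDup_filter, NoDup_nodup.
  intros x. rewrite !filter_In, !nodup_In. unfold nzb.
  destruct (Req_dec_T (g x) 0) as [e|e]; [split; intros [_ X]; discriminate|]. specialize (H x e). tauto.
Qed.

Lemma sumL_ext l g g' : (forall I, In I l -> g I = g' I) -> sumL l g = sumL l g'.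
Proof.
  intros H. unfold sumL. assert (H' : forall I, In I (nodup MI_eq_dec l) -> g I = g' I).
  { intros I HI; apply H, (nodup_In MI_eq_dec); auto. }
  induction (nodup MI_eq_dec l) as [|a r IH]; simpl; auto.
  rewrite H' by (left; auto). rewrite IH; auto. intros; apply H'; right; auto.
Qed.

Lemma fr_plus g1 g2 l : fold_right (fun I acc => (g1 I + g2 I) + acc) 0 l = fr g1 l + fr g2 l.
Proof. induction l; simpl; unfold fr in *; simpl; lra. Qed.

Lemma sumL_plus l g1 g2 : sumL l (fun I => g1 I + g2 I) = sumL l g1 + sumL l g2.
Proof. unfold sumL. apply fr_plus. Qed.

Lemma sumL_scal l c g : sumL l (fun I => c * g I) = c * sumL l g.
Proof. unfold sumL. induction (nodup MI_eq_dec l); simpl; lra. Qed.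

Lemma sumL_zero l g : (forall I, In I l -> g I = 0) -> sumL l g = 0.
Proof.
  intros H. rewrite (sumL_ext l g (fun _ => 0)) by auto.
  unfold sumL. induction (nodup MI_eq_dec l); simpl; lra.
Qed.

Lemma sumL_opp l g : sumL l (fun I => - g I) = - sumL l g.
Proof. unfold sumL. induction (nodup MI_eq_dec l); simpl; lra. Qed.

Lemma sumL_single J g : sumL [J] g = g J.
Proof. unfold sumL. simpl. lra. Qed.

Definition dep (S : list MI) (f : J -> R) : Prop :=
  forall v w, (forall I, In I S -> v I = w I) -> f v = f w.

Lemma upd_same v I : upd v I (v I) = v.
Proof. apply functional_extensionality; intro K; unfold upd; destruct MI_eq_dec; subst; auto. Qed.

Lemma upd_eq v I s : upd v I s I = s.
Proof. unfold upd; destruct MI_eq_dec; congruence. Qed.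

Lemma upd_neq v I s K : K <> I -> upd v I s K = v K.
Proof. unfold upd; destruct MI_eq_dec; congruence. Qed.

Lemma dep_incl S S' f : dep S f -> incl S S' -> dep S' f.
Proof. intros H Hi v w Hvw. apply H. intros; apply Hvw, Hi; auto. Qed.

Lemma pd_nodep S f I v : dep S f -> ~ In I S -> pd I f v = 0.
Proof.
  intros H HI. unfold pd. rewrite (Derive_ext _ (fun _ => f v)). apply Derive_const.
  intros t. apply H. intros K HK. apply upd_neq. intro; subst; auto.
Qed.

Lemma dep_pd S f I : dep S f -> dep S (pd I f).
Proof.
  intros H v w Hvw. destruct (in_dec MI_eq_dec I S) as [HI|HI].
  - unfold pd. rewrite (Hvw I HI). apply Derive_ext. intros t. apply H.
    intros K HK. unfold upd. destruct MI_eq_dec; auto.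
  - rewrite !(pd_nodep S) by auto. auto.
Qed.

Definition Dsem (S : list MI) (f : J -> R) (k : nat) : J -> R :=
  fun v => sumL S (fun I => v (incr k I) * pd I f v).

Lemma Dsem_indep S1 S2 f k v : dep S1 f -> dep S2 f -> Dsem S1 f k v = Dsem S2 f k v.
Proof.
  intros H1 H2. unfold Dsem. apply sumL_eq. intros I HI.
  destruct (in_dec MI_eq_dec I S1) as [h1|h1]; destruct (in_dec MI_eq_dec I S2) as [h2|h2]; try tauto;
  exfalso; apply HI; [rewrite (pd_nodep S2) | rewrite (pd_nodep S1)]; auto; lra.
Qed.

Lemma dep_Dsem S f k : dep S f -> dep (S ++ map (incr k) S) (Dsem S f k).
Proof.
  intros H v w Hvw. unfold Dsem. apply sumL_ext. intros I HI.
  rewrite (Hvw (incr k I)) by (apply in_or_app; right; apply in_map; auto).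
  rewrite (dep_pd S f I H v w); auto. intros; apply Hvw, in_or_app; auto.
Qed.


Definition xb (N : nat) (K : MI) : bool :=
  Nat.eqb (length K) N && forallb (fun x => Nat.eqb x 0) (tl K).

Definition sig (N : nat) (v : J) : J := fun K => if xb N K then v K else 0.

Lemma sig_upd_x N v I s : xb N I = true -> sig N (upd v I s) = upd (sig N v) I s.
Proof.
  intros H. apply functional_extensionality; intro K. unfold sig, upd.
  destruct MI_eq_dec; subst; auto. rewrite H; auto.
Qed.

Lemma sig_upd_nx N v I s : xb N I = false -> sig N (upd v I s) = sig N v.
Proof.
  intros H. apply functional_extensionality; intro K. unfold sig, upd.
  destruct MI_eq_dec; subst; auto. rewrite H; auto.
Qed.

Inductive Good (N : nat) : (J -> R) -> Prop :=
| G_base S f : smooth_on S f -> Good N f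
| G_const c : Good N (fun _ => c)
| G_coord K : Good N (fun v => v K)
| G_add f g : Good N f -> Good N g -> Good N (fun v => f v + g v)
| G_sub f g : Good N f -> Good N g -> Good N (fun v => f v - g v)
| G_mul f g : Good N f -> Good N g -> Good N (fun v => f v * g v)
| G_sig f : Good N f -> Good N (fun v => f (sig N v)).

Lemma good_exd N f : Good N f -> forall I v, ex_derive (fun s => f (upd v I s)) (v I).
Proof.
  induction 1; intros I v.
  - destruct (H nil) as [H1 _]. apply H1.
  - apply ex_derive_const.
  - unfold upd. destruct (MI_eq_dec K I).
    + apply ex_derive_id.
    + apply ex_derive_const.
  - apply (ex_derive_plus (fun s => f (upd v I s)) (fun s => g (upd v I s))); auto.
  - apply (ex_derive_minus (fun s => f (upd v I s)) (fun s => g (upd v I s))); auto.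
  - apply (ex_derive_mult (fun s => f (upd v I s)) (fun s => g (upd v I s))); auto.
  - case_eq (xb N I); intro E.
    + apply (ex_derive_ext (fun s => f (upd (sig N v) I s))).
      * intros t; rewrite sig_upd_x; auto.
      * replace (v I) with (sig N v I) by (unfold sig; rewrite E; auto). apply IHGood.
    + apply (ex_derive_ext (fun s => f (sig N v))).
      * intros t; rewrite sig_upd_nx; auto.
      * apply ex_derive_const.
Qed.

Lemma iter_pd_app l1 l2 f : iter_pd (l1 ++ l2) f = iter_pd l1 (iter_pd l2 f).
Proof. induction l1; simpl; auto. rewrite IHl1; auto. Qed.

Lemma pd_add N f g I : Good N f -> Good N g ->
  pd I (fun v => f v + g v) = fun v => pd I f v + pd I g v.
Proof.
  intros Hf Hg. apply functional_extensionality; intro v. unfold pd.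
  apply (Derive_plus (fun s => f (upd v I s)) (fun s => g (upd v I s))); apply (good_exd N); auto.
Qed.

Lemma pd_sub N f g I : Good N f -> Good N g ->
  pd I (fun v => f v - g v) = fun v => pd I f v - pd I g v.
Proof.
  intros Hf Hg. apply functional_extensionality; intro v. unfold pd.
  apply (Derive_minus (fun s => f (upd v I s)) (fun s => g (upd v I s))); apply (good_exd N); auto.
Qed.

Lemma pd_mul N f g I : Good N f -> Good N g ->
  pd I (fun v => f v * g v) = fun v => pd I f v * g v + f v * pd I g v.
Proof.
  intros Hf Hg. apply functional_extensionality; intro v. unfold pd.
  rewrite (Derive_mult (fun s => f (upd v I s)) (fun s => g (upd v I s))); try (apply (good_exd N); auto).
  rewrite !upd_same. auto.
Qed.

Lemma pd_const I c : pd I (fun _ => c) = fun _ => 0.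
Proof. apply functional_extensionality; intro v. unfold pd. apply Derive_const. Qed.

Lemma pd_coord I K : pd I (fun v => v K) = fun _ => if MI_eq_dec K I then 1 else 0.
Proof.
  apply functional_extensionality; intro v. unfold pd, upd. destruct (MI_eq_dec K I).
  - apply Derive_id.
  - apply Derive_const.
Qed.

Lemma pd_sig N f I : pd I (fun v => f (sig N v)) =
  fun v => if xb N I then pd I f (sig N v) else 0.
Proof.
  apply functional_extensionality; intro v. unfold pd. case_eq (xb N I); intro E.
  - replace (sig N v I) with (v I) by (unfold sig; rewrite E; auto).
    apply Derive_ext. intros t; rewrite sig_upd_x; auto.
  - rewrite (Derive_ext _ (fun _ => f (sig N v))). apply Derive_const.
    intros t; rewrite sig_upd_nx; auto.
Qed.

Lemma good_pd N f : Good N f -> forall I, Good N (pd I f).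
Proof.
  induction 1; intros I.
  - apply (G_base N S). intros l. change (pd I f) with (iter_pd [I] f). rewrite <- (iter_pd_app l [I]). apply H.
  - rewrite pd_const. apply G_const.
  - rewrite pd_coord. apply G_const.
  - rewrite (pd_add N f g); auto. apply G_add; auto.
  - rewrite (pd_sub N f g); auto. apply G_sub; auto.
  - rewrite (pd_mul N f g); auto. apply G_add; apply G_mul; auto.
  - rewrite pd_sig. destruct (xb N I). apply (G_sig N (pd I f)); auto. apply G_const.
Qed.

Lemma good_iter_pd N f l : Good N f -> Good N (iter_pd l f).
Proof. intros H; induction l; simpl; auto. apply good_pd; auto. Qed.

Lemma cont_on_incl S S' f : cont_on S f -> incl S S' -> cont_on S' f.
Proof.
  intros H Hi v eps he. destruct (H v eps he) as [d [hd Hd]]. exists d; split; [exact hd|].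
  intros w Hw. apply Hd. intros; apply Hw, Hi; auto.
Qed.

Lemma cont_on_add S1 S2 f g : cont_on S1 f -> cont_on S2 g -> cont_on (S1 ++ S2) (fun v => f v + g v).
Proof.
  intros Hf Hg v eps he.
  destruct (Hf v (eps/2)) as [d1 [h1 H1]]; try lra.
  destruct (Hg v (eps/2)) as [d2 [h2 H2]]; try lra.
  exists (Rmin d1 d2); split. apply Rmin_pos; auto.
  intros w Hw.
  assert (A1 := H1 w (fun I HI => Rlt_le_trans _ _ _ (Hw I (in_or_app _ _ _ (or_introl HI))) (Rmin_l _ _))).
  assert (A2 := H2 w (fun I HI => Rlt_le_trans _ _ _ (Hw I (in_or_app _ _ _ (or_intror HI))) (Rmin_r _ _))).
  replace (f w + g w - (f v + g v)) with ((f w - f v) + (g w - g v)) by ring.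
  eapply Rle_lt_trans; [apply Rabs_triang|]. lra.
Qed.

Lemma cont_on_opp S f : cont_on S f -> cont_on S (fun v => - f v).
Proof.
  intros Hf v eps he. destruct (Hf v eps he) as [d [hd Hd]]. exists d; split; auto.
  intros w Hw. replace (- f w - - f v) with (- (f w - f v)) by ring. rewrite Rabs_Ropp; auto.
Qed.

Lemma cont_on_mul S1 S2 f g : cont_on S1 f -> cont_on S2 g -> cont_on (S1 ++ S2) (fun v => f v * g v).
Proof.
  intros Hf Hg v eps he.
  set (K := Rabs (f v) + Rabs (g v) + 1).
  assert (hK : 0 < K) by (unfold K; pose proof (Rabs_pos (f v)); pose proof (Rabs_pos (g v)); lra).
  set (e' := Rmin 1 (eps / (2 * K))).
  assert (he' : 0 < e') by (apply Rmin_pos; [lra| apply Rdiv_lt_0_compat; lra]).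
  destruct (Hf v e') as [d1 [h1 H1]]; auto.
  destruct (Hg v e') as [d2 [h2 H2]]; auto.
  exists (Rmin d1 d2); split. apply Rmin_pos; auto.
  intros w Hw.
  assert (A1 := H1 w (fun I HI => Rlt_le_trans _ _ _ (Hw I (in_or_app _ _ _ (or_introl HI))) (Rmin_l _ _))).
  assert (A2 := H2 w (fun I HI => Rlt_le_trans _ _ _ (Hw I (in_or_app _ _ _ (or_intror HI))) (Rmin_r _ _))).
  replace (f w * g w - f v * g v) with ((f w - f v) * g w + f v * (g w - g v)) by ring.
  eapply Rle_lt_trans; [apply Rabs_triang|]. rewrite !Rabs_mult.
  assert (e'1 : e' <= 1) by apply Rmin_l.
  assert (e'2 : e' <= eps / (2 * K)) by apply Rmin_r.
  assert (Hgw : Rabs (g w) <= Rabs (g v) + 1).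
  { replace (g w) with (g v + (g w - g v)) by ring. eapply Rle_trans; [apply Rabs_triang|]. lra. }
  assert (B1 : Rabs (f w - f v) * Rabs (g w) <= e' * (Rabs (g v) + 1)).
  { apply Rmult_le_compat; try apply Rabs_pos; lra. }
  assert (B2 : Rabs (f v) * Rabs (g w - g v) <= Rabs (f v) * e').
  { apply Rmult_le_compat_l; [apply Rabs_pos| lra]. }
  assert (B3 : e' * K <= eps / 2).
  { replace (eps/2) with (eps / (2*K) * K) by (field; lra). apply Rmult_le_compat_r; lra. }
  unfold K in B3. lra.
Qed.

Lemma good_cont N f : Good N f -> exists S, cont_on S f.
Proof.
  induction 1.
  - exists S. apply (H nil).
  - exists nil. intros v eps he. exists 1; split; [lra|]. intros. rewrite Rminus_diag, Rabs_R0; auto.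
  - exists [K]. intros v eps he. exists eps; split; auto. intros w Hw. apply Hw; left; auto.
  - destruct IHGood1 as [S1 H1], IHGood2 as [S2 H2]. exists (S1 ++ S2). apply cont_on_add; auto.
  - destruct IHGood1 as [S1 H1], IHGood2 as [S2 H2]. exists (S1 ++ S2).
    apply (cont_on_add S1 S2 f (fun v => - g v)); auto. apply cont_on_opp; auto.
  - destruct IHGood1 as [S1 H1], IHGood2 as [S2 H2]. exists (S1 ++ S2). apply cont_on_mul; auto.
  - destruct IHGood as [S HS]. exists S. intros v eps he. destruct (HS (sig N v) eps he) as [d [hd Hd]].
    exists d; split; auto. intros w Hw. apply Hd. intros I HI. unfold sig. destruct (xb N I); auto.
    rewrite Rminus_diag, Rabs_R0; auto.
Qed.

Lemma cont_transfer S S' f : cont_on S' f -> dep S f -> cont_on S f.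
Proof.
  intros H Hd v eps he. destruct (H v eps he) as [d [hd Hd']]. exists d; split; auto.
  intros w Hw. set (w' := fun K => if in_dec MI_eq_dec K S then w K else v K).
  rewrite (Hd w w'). apply Hd'. intros I _. unfold w'. destruct in_dec; auto.
  rewrite Rminus_diag, Rabs_R0; auto.
  intros I HI. unfold w'. destruct in_dec; tauto.
Qed.

Lemma good_smooth N S f : Good N f -> dep S f -> smooth_on S f.
Proof.
  intros Hg Hd l. assert (G := good_iter_pd N f l Hg).
  assert (D : dep S (iter_pd l f)) by (clear G; induction l; simpl; [auto| apply dep_pd; auto]).
  split. apply (good_exd N); auto.
  destruct (good_cont N _ G) as [S' HS']. apply (cont_transfer S S'); auto.
Qed.


Definition WF (N : nat) (F : DF) : Prop := dep (supp F) (fn F) /\ Good N (fn F).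
Definition constDF (c : R) : DF := mkDF nil (fun _ => c).

Lemma good_sumL N S (g : MI -> J -> R) : (forall I, Good N (g I)) ->
  Good N (fun v => sumL S (fun I => g I v)).
Proof.
  intros H. unfold sumL. induction (nodup MI_eq_dec S) as [|a l IH]; simpl.
  - apply G_const.
  - apply (G_add N (fun v => g a v)); auto.
Qed.

Lemma WF_Dt N k F : WF N F -> WF N (Dt k F).
Proof.
  intros [Hd Hg]. split.
  - apply dep_Dsem; auto.
  - simpl. apply (good_sumL N _ (fun I v => v (incr k I) * pd I (fn F) v)). intros I.
    apply (G_mul N (fun v => v (incr k I))). apply G_coord. apply good_pd; auto.
Qed.

Lemma WF_iter N k n F : WF N F -> WF N (Nat.iter n (Dt k) F).
Proof. intros H; induction n; simpl; auto. apply WF_Dt; auto. Qed.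

Lemma Dt_ext N k F G : WF N F -> WF N G -> fn F = fn G -> fn (Dt k F) = fn (Dt k G).
Proof.
  intros [HF _] [HG _] E. apply functional_extensionality; intro v.
  change (Dsem (supp F) (fn F) k v = Dsem (supp G) (fn G) k v). rewrite E in *.
  apply Dsem_indep; auto.
Qed.

Lemma iter_ext N k n F G : WF N F -> WF N G -> fn F = fn G ->
  fn (Nat.iter n (Dt k) F) = fn (Nat.iter n (Dt k) G).
Proof.
  intros HF HG E. induction n; simpl; auto. apply (Dt_ext N); auto; apply WF_iter; auto.
Qed.

Lemma WF_add N F G : WF N F -> WF N G -> WF N (addDF F G).
Proof.
  intros [HF GF] [HG GG]. split. intros v w H. simpl. rewrite (HF v w), (HG v w); auto;
  intros; apply H, in_or_app; auto. apply G_add; auto.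
Qed.
Lemma WF_sub N F G : WF N F -> WF N G -> WF N (subDF F G).
Proof.
  intros [HF GF] [HG GG]. split. intros v w H. simpl. rewrite (HF v w), (HG v w); auto;
  intros; apply H, in_or_app; auto. apply G_sub; auto.
Qed.
Lemma WF_mul N F G : WF N F -> WF N G -> WF N (mulDF F G).
Proof.
  intros [HF GF] [HG GG]. split. intros v w H. simpl. rewrite (HF v w), (HG v w); auto;
  intros; apply H, in_or_app; auto. apply G_mul; auto.
Qed.
Lemma WF_coord N K : WF N (coordF K).
Proof. split. intros v w H. simpl. apply H; left; auto. apply G_coord. Qed.
Lemma WF_const N c : WF N (constDF c).
Proof. split. intros v w H; auto. exact (G_const N c). Qed.
Lemma WF_pdF N I F : WF N F -> WF N (pdF I F).
Proof. intros [HF GF]. split. apply dep_pd; auto. apply good_pd; auto. Qed.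

Lemma WF_dfun N F : is_dfun N F -> WF N F.
Proof. intros [_ [H1 H2]]. split. exact H1. apply (G_base N (supp F)); auto. Qed.

Lemma Dt_add_val N k F G : WF N F -> WF N G ->
  fn (Dt k (addDF F G)) = fun v => fn (Dt k F) v + fn (Dt k G) v.
Proof.
  intros [HF GF] [HG GG]. apply functional_extensionality; intro v.
  change (Dsem (supp F ++ supp G) (fun v => fn F v + fn G v) k v =
          Dsem (supp F) (fn F) k v + Dsem (supp G) (fn G) k v).
  unfold Dsem at 1.
  rewrite (sumL_ext _ _ (fun I => v (incr k I) * pd I (fn F) v + v (incr k I) * pd I (fn G) v))
    by (intros I _; first [rewrite (pd_add N (fn F) (fn G)) by auto|rewrite (pd_sub N (fn F) (fn G)) by auto|rewrite (pd_mul N (fn F) (fn G)) by auto]; ring).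
  rewrite sumL_plus.
  change (Dsem (supp F ++ supp G) (fn F) k v + Dsem (supp F ++ supp G) (fn G) k v =
          Dsem (supp F) (fn F) k v + Dsem (supp G) (fn G) k v).
  rewrite (Dsem_indep (supp F ++ supp G) (supp F)), (Dsem_indep (supp F ++ supp G) (supp G)); auto;
  eapply dep_incl; eauto; intros ? ?; apply in_or_app; auto.
Qed.

Lemma Dt_sub_val N k F G : WF N F -> WF N G ->
  fn (Dt k (subDF F G)) = fun v => fn (Dt k F) v - fn (Dt k G) v.
Proof.
  intros [HF GF] [HG GG]. apply functional_extensionality; intro v.
  change (Dsem (supp F ++ supp G) (fun v => fn F v - fn G v) k v =
          Dsem (supp F) (fn F) k v - Dsem (supp G) (fn G) k v).
  unfold Dsem at 1.
  rewrite (sumL_ext _ _ (fun I => v (incr k I) * pd I (fn F) v + (-1) * (v (incr k I) * pd I (fn G) v)))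
    by (intros I _; first [rewrite (pd_add N (fn F) (fn G)) by auto|rewrite (pd_sub N (fn F) (fn G)) by auto|rewrite (pd_mul N (fn F) (fn G)) by auto]; ring).
  rewrite sumL_plus, sumL_scal.
  change (Dsem (supp F ++ supp G) (fn F) k v + -1 * Dsem (supp F ++ supp G) (fn G) k v =
          Dsem (supp F) (fn F) k v - Dsem (supp G) (fn G) k v).
  rewrite (Dsem_indep (supp F ++ supp G) (supp F)), (Dsem_indep (supp F ++ supp G) (supp G)); auto;
  try (eapply dep_incl; eauto; intros ? ?; apply in_or_app; auto). ring.
Qed.

Lemma Dt_mul_val N k F G : WF N F -> WF N G ->
  fn (Dt k (mulDF F G)) = fun v => fn (Dt k F) v * fn G v + fn F v * fn (Dt k G) v.
Proof.
  intros [HF GF] [HG GG]. apply functional_extensionality; intro v.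
  change (Dsem (supp F ++ supp G) (fun v => fn F v * fn G v) k v =
          Dsem (supp F) (fn F) k v * fn G v + fn F v * Dsem (supp G) (fn G) k v).
  unfold Dsem at 1.
  rewrite (sumL_ext _ _ (fun I => fn G v * (v (incr k I) * pd I (fn F) v) + fn F v * (v (incr k I) * pd I (fn G) v)))
    by (intros I _; first [rewrite (pd_add N (fn F) (fn G)) by auto|rewrite (pd_sub N (fn F) (fn G)) by auto|rewrite (pd_mul N (fn F) (fn G)) by auto]; ring).
  rewrite sumL_plus, !sumL_scal.
  change (fn G v * Dsem (supp F ++ supp G) (fn F) k v + fn F v * Dsem (supp F ++ supp G) (fn G) k v =
          Dsem (supp F) (fn F) k v * fn G v + fn F v * Dsem (supp G) (fn G) k v).
  rewrite (Dsem_indep (supp F ++ supp G) (supp F)), (Dsem_indep (supp F ++ supp G) (supp G)); auto;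
  try (eapply dep_incl; eauto; intros ? ?; apply in_or_app; auto). ring.
Qed.

Lemma Dt_coord_val k K : fn (Dt k (coordF K)) = fun v => v (incr k K).
Proof.
  apply functional_extensionality; intro v. simpl. rewrite sumL_single.
  change (fun v0 : J => v0 K) with (fn (coordF K)). simpl. rewrite pd_coord.
  destruct MI_eq_dec; [ring|congruence].
Qed.

Lemma Dt_const_val k c : fn (Dt k (constDF c)) = fun _ => 0.
Proof. apply functional_extensionality; intro v. reflexivity. Qed.

Lemma Dt_zero_val N k F : WF N F -> fn F = (fun _ => 0) -> fn (Dt k F) = fun _ => 0.
Proof.
  intros H E. rewrite (Dt_ext N k F (constDF 0)); auto. apply WF_const.
Qed.

Lemma iter_zero_val N k n F : WF N F -> fn F = (fun _ => 0) -> fn (Nat.iter n (Dt k) F) = fun _ => 0.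
Proof.
  intros H E. rewrite (iter_ext N k n F (constDF 0)); auto. 2: apply WF_const.
  induction n. reflexivity.
  change (fn (Dt k (Nat.iter n (Dt k) (constDF 0))) = fun _ => 0).
  apply (Dt_zero_val N); auto. apply WF_iter, WF_const.
Qed.

Lemma iter_add N k n F G : WF N F -> WF N G ->
  fn (Nat.iter n (Dt k) (addDF F G)) = fun v => fn (Nat.iter n (Dt k) F) v + fn (Nat.iter n (Dt k) G) v.
Proof.
  intros HF HG. induction n. reflexivity.
  change (fn (Dt k (Nat.iter n (Dt k) (addDF F G))) =
     (fun v => fn (Dt k (Nat.iter n (Dt k) F)) v + fn (Dt k (Nat.iter n (Dt k) G)) v)).
  rewrite (Dt_ext N k _ (addDF (Nat.iter n (Dt k) F) (Nat.iter n (Dt k) G))); auto.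
  apply (Dt_add_val N); apply WF_iter; auto.
  apply WF_iter, WF_add; auto. apply WF_add; apply WF_iter; auto.
Qed.

Lemma iter_sub N k n F G : WF N F -> WF N G ->
  fn (Nat.iter n (Dt k) (subDF F G)) = fun v => fn (Nat.iter n (Dt k) F) v - fn (Nat.iter n (Dt k) G) v.
Proof.
  intros HF HG. induction n. reflexivity.
  change (fn (Dt k (Nat.iter n (Dt k) (subDF F G))) =
     (fun v => fn (Dt k (Nat.iter n (Dt k) F)) v - fn (Dt k (Nat.iter n (Dt k) G)) v)).
  rewrite (Dt_ext N k _ (subDF (Nat.iter n (Dt k) F) (Nat.iter n (Dt k) G))); auto.
  apply (Dt_sub_val N); apply WF_iter; auto.
  apply WF_iter, WF_sub; auto. apply WF_sub; apply WF_iter; auto.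
Qed.

Lemma iter_coord k n K : fn (Nat.iter n (Dt k) (coordF K)) = fn (coordF (Nat.iter n (incr k) K)).
Proof.
  induction n. reflexivity.
  change (fn (Dt k (Nat.iter n (Dt k) (coordF K))) = fn (coordF (incr k (Nat.iter n (incr k) K)))).
  rewrite (Dt_ext 0 k _ (coordF (Nat.iter n (incr k) K))); auto.
  apply Dt_coord_val. apply WF_iter, WF_coord. apply WF_coord.
Qed.


Lemma length_incr k I : length (incr k I) = length I.
Proof. revert k; induction I; intros [|k]; simpl; auto. Qed.

Lemma length_iter_incr k n I : length (Nat.iter n (incr k) I) = length I.
Proof. induction n; simpl; auto. rewrite length_incr; auto. Qed.

Lemma nth_incr k I m : (k < length I)%nat ->
  nth m (incr k I) 0%nat = if Nat.eqb m k then S (nth m I 0%nat) else nth m I 0%nat.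
Proof.
  revert k m; induction I as [|a I IH]; intros k m H; simpl in H; [lia|].
  destruct k, m; simpl; auto. apply IH; lia.
Qed.

Lemma nth_iter_incr k n I m : (k < length I)%nat ->
  nth m (Nat.iter n (incr k) I) 0%nat = if Nat.eqb m k then (n + nth m I 0)%nat else nth m I 0%nat.
Proof.
  intros H. induction n; simpl. destruct (Nat.eqb m k); auto.
  rewrite nth_incr by (rewrite length_iter_incr; auto). rewrite IHn. destruct (Nat.eqb m k); auto.
Qed.

Lemma incr_comm a b I : incr a (incr b I) = incr b (incr a I).
Proof.
  revert a b; induction I as [|x I IH]; intros [|a] [|b]; simpl; auto. rewrite IH; auto.
Qed.

Lemma iter_incr_comm a b n I : Nat.iter n (incr a) (incr b I) = incr b (Nat.iter n (incr a) I).
Proof. induction n; simpl; auto. rewrite IHn, incr_comm; auto. Qed.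

Lemma nth_zeroMI N m : nth m (zeroMI N) 0%nat = 0%nat.
Proof. unfold zeroMI. revert m; induction N; intros [|m]; simpl; auto. Qed.

Lemma length_zeroMI N : length (zeroMI N) = N.
Proof. apply repeat_length. Qed.

Definition ones (N a : nat) : MI := Nat.iter a (incr 0) (zeroMI N).

Lemma MI_ext I K : length I = length K -> (forall m, nth m I 0%nat = nth m K 0%nat) -> I = K.
Proof. intros; apply nth_ext with 0%nat 0%nat; auto. Qed.

Lemma ordMI_incr k I : (k < length I)%nat -> ordMI (incr k I) = S (ordMI I).
Proof.
  revert k; induction I as [|a I IH]; intros k H; simpl in H; [lia|].
  destruct k; simpl; auto. rewrite IH by lia. lia.
Qed.

Lemma ordMI_zero N : ordMI (zeroMI N) = 0%nat.
Proof. unfold zeroMI, ordMI. induction N; simpl; auto. Qed.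

Lemma ordMI_ones N a : (0 < N)%nat -> ordMI (ones N a) = a.
Proof.
  intros H. unfold ones. induction a. apply ordMI_zero.
  change (ordMI (incr 0 (Nat.iter a (incr 0) (zeroMI N))) = S a).
  rewrite ordMI_incr, IHa; auto. rewrite length_iter_incr, length_zeroMI; auto.
Qed.

Lemma maxord_ge F I : In I (supp F) -> (ordMI I <= maxord F)%nat.
Proof.
  unfold maxord. induction (supp F); simpl; intros H; [tauto|]. destruct H as [H|H].
  subst; lia. specialize (IHl H). lia.
Qed.

Lemma xonly_xb N I : xonly N I <-> xb N I = true.
Proof.
  unfold xonly, xb. rewrite Bool.andb_true_iff, Nat.eqb_eq, forallb_forall.
  split; intros [H1 H2]; split; auto.
  - intros x Hx. apply Nat.eqb_eq. destruct I as [|a I]; simpl in Hx; [tauto|].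
    destruct (In_nth _ _ 0%nat Hx) as [m [_ Hm]]. rewrite <- Hm. apply (H2 (S m)). lia.
  - intros k Hk. destruct k; [lia|]. destruct I as [|a I]; simpl; [destruct k; auto|].
    destruct (Nat.lt_ge_cases k (length I)).
    + apply Nat.eqb_eq, H2. apply nth_In; auto.
    + apply nth_overflow; auto.
Qed.

Lemma xonly_ones N a : xonly N (ones N a).
Proof.
  split. unfold ones; rewrite length_iter_incr, length_zeroMI; auto.
  intros k Hk. unfold ones. destruct N.
  - assert (E : Nat.iter a (incr 0) (zeroMI 0) = []).
    { induction a; [reflexivity|]. change (incr 0 (Nat.iter a (incr 0) (zeroMI 0)) = []).
      rewrite IHa. reflexivity. }
    rewrite E. destruct k; auto.
  - rewrite nth_iter_incr by (rewrite length_zeroMI; lia). destruct k; [lia|]. simpl. apply nth_zeroMI.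
Qed.

Lemma xonly_eq_ones N I : (0 < N)%nat -> xonly N I -> I = ones N (ordMI I).
Proof.
  intros HN [HL HI]. apply MI_ext.
  - unfold ones; rewrite length_iter_incr, length_zeroMI; auto.
  - intros m. unfold ones. rewrite nth_iter_incr by (rewrite length_zeroMI; lia).
    rewrite nth_zeroMI. destruct m.
    + simpl. destruct I as [|a I]; simpl in HL; [lia|]. simpl.
      assert (fold_right Nat.add 0%nat I = 0%nat).
      { assert (forall m, nth m I 0%nat = 0%nat) by (intros m; apply (HI (S m)); lia).
        clear HL HI. induction I as [|b I IHI]; simpl; auto. pose proof (H 0%nat) as H0; simpl in H0; subst.
        rewrite IHI; auto. intros m; apply (H (S m)). }
      unfold ordMI; simpl; lia.
    + simpl. apply HI; lia.
Qed.

Lemma xonly_incr0 N I : xonly N I -> xonly N (incr 0 I).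
Proof.
  intros [HL HI]. split. rewrite length_incr; auto. intros k Hk.
  destruct I as [|a I]; [destruct k; reflexivity|]. destruct k; [lia|]. exact (HI (S k) Hk).
Qed.

Lemma not_xonly_incr N j I : (0 < j < N)%nat -> length I = N -> ~ xonly N (incr j I).
Proof.
  intros Hj HL [_ H]. specialize (H j ltac:(lia)). rewrite nth_incr in H by lia.
  rewrite Nat.eqb_refl in H. discriminate.
Qed.

Lemma xonly_incr0_iff N I : xonly N (incr 0 I) -> xonly N I.
Proof.
  intros [HL HI]. rewrite length_incr in HL. split; auto. intros k Hk.
  specialize (HI k Hk). destruct I as [|a I]; simpl in *; auto. destruct k; [lia|]. auto.
Qed.

Lemma Dmulti_aux_zeros k n F : Dmulti_aux k (repeat 0%nat n) F = F.
Proof. revert k; induction n; intros k; simpl; auto. Qed.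

Lemma iter_incr0_cons a Rl : Nat.iter a (incr 0) (0%nat :: Rl) = a :: Rl.
Proof. induction a; [reflexivity|]. change (incr 0 (Nat.iter a (incr 0) (0%nat :: Rl)) = S a :: Rl).
  rewrite IHa; reflexivity. Qed.

Lemma Dmulti_ones N a F : (0 < N)%nat -> Dmulti (ones N a) F = Nat.iter a (Dt 0) F.
Proof.
  intros H. destruct N; [lia|]. unfold ones, zeroMI. simpl repeat.
  rewrite iter_incr0_cons. unfold Dmulti. simpl. apply Dmulti_aux_zeros.
Qed.

Lemma Dmulti_aux_e n k j F : (j < n)%nat -> Dmulti_aux k (incr j (repeat 0%nat n)) F = Dt (k + j) F.
Proof.
  revert k j; induction n; intros k j H; [lia|]. simpl repeat. destruct j.
  - simpl. rewrite Dmulti_aux_zeros, Nat.add_0_r; auto.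
  - simpl. rewrite IHn by lia. f_equal; lia.
Qed.

Lemma Dmulti_e N j F : (j < N)%nat -> Dmulti (eMI N j) F = Dt j F.
Proof. intros H. unfold Dmulti, eMI, zeroMI. rewrite Dmulti_aux_e; auto. Qed.

Lemma Dmulti_zero N F : Dmulti (zeroMI N) F = F.
Proof. unfold Dmulti, zeroMI. apply Dmulti_aux_zeros. Qed.

Lemma WF_Dmulti_aux N k K F : WF N F -> WF N (Dmulti_aux k K F).
Proof. revert k F; induction K; intros k F H; simpl; auto. apply IHK, WF_iter; auto. Qed.

Lemma Dmulti_aux_ext N k K F G : WF N F -> WF N G -> fn F = fn G ->
  fn (Dmulti_aux k K F) = fn (Dmulti_aux k K G).
Proof.
  revert k F G; induction K; intros k F G HF HG E; simpl; auto.
  apply IHK; try apply WF_iter; auto. apply (iter_ext N); auto.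
Qed.

Lemma Dmulti_aux_sub N k K F G : WF N F -> WF N G ->
  fn (Dmulti_aux k K (subDF F G)) = fun v => fn (Dmulti_aux k K F) v - fn (Dmulti_aux k K G) v.
Proof.
  revert k F G; induction K; intros k F G HF HG; simpl; auto.
  rewrite (Dmulti_aux_ext N (S k) K _ (subDF (Nat.iter a (Dt k) F) (Nat.iter a (Dt k) G))).
  apply IHK; apply WF_iter; auto.
  apply WF_iter, WF_sub; auto. apply WF_sub; apply WF_iter; auto.
  apply (iter_sub N); auto.
Qed.

Fixpoint sh (k : nat) (K : MI) (J0 : MI) : MI :=
  match K with nil => J0 | a :: l => sh (S k) l (Nat.iter a (incr k) J0) end.

Lemma Dmulti_aux_coord k K J0 : fn (Dmulti_aux k K (coordF J0)) = fn (coordF (sh k K J0)).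
Proof.
  revert k J0; induction K; intros k J0; simpl; auto.
  rewrite (Dmulti_aux_ext 0 (S k) K _ (coordF (Nat.iter a (incr k) J0))).
  apply IHK. apply WF_iter, WF_coord. apply WF_coord. apply iter_coord.
Qed.

Lemma sh_incr k K i J0 : sh k K (incr i J0) = incr i (sh k K J0).
Proof.
  revert k J0; induction K; intros k J0; simpl; auto. rewrite iter_incr_comm; auto.
Qed.

Lemma incr_app_len P x Rl : incr (length P) (P ++ x :: Rl) = P ++ S x :: Rl.
Proof. induction P; simpl; auto. rewrite IHP; auto. Qed.

Lemma iter_incr_app_len P x Rl a : Nat.iter a (incr (length P)) (P ++ x :: Rl) = P ++ (a + x)%nat :: Rl.
Proof. induction a; [reflexivity|].
  change (incr (length P) (Nat.iter a (incr (length P)) (P ++ x :: Rl)) = P ++ (S a + x)%nat :: Rl).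
  rewrite IHa, incr_app_len; auto. Qed.

Lemma sh_gen K P : sh (length P) K (P ++ repeat 0%nat (length K)) = P ++ K.
Proof.
  revert P; induction K as [|a K IH]; intros P; simpl. rewrite app_nil_r; auto.
  rewrite iter_incr_app_len, Nat.add_0_r.
  replace (S (length P)) with (length (P ++ [a])) by (rewrite length_app; simpl; lia).
  replace (P ++ a :: repeat 0%nat (length K)) with ((P ++ [a]) ++ repeat 0%nat (length K))
    by (rewrite <- app_assoc; auto).
  rewrite IH, <- app_assoc; auto.
Qed.

Lemma sh_zero N K : length K = N -> sh 0 K (zeroMI N) = K.
Proof. intros H. unfold zeroMI. subst. apply (sh_gen K nil). Qed.


Lemma dep_x N S f v : dep S f -> List.Forall (xonly N) S -> f (sig N v) = f v.
Proof.
  intros H HS. apply H. intros I HI. rewrite Forall_forall in HS.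
  unfold sig. rewrite (proj1 (xonly_xb N I)); auto.
Qed.

Definition XS N (F : DF) := List.Forall (xonly N) (supp F).

Lemma XS_Dt0 N F : XS N F -> XS N (Dt 0 F).
Proof.
  unfold XS; simpl. intros H. apply List.Forall_app; split; auto.
  apply List.Forall_map. eapply List.Forall_impl; [|exact H]. intros; apply xonly_incr0; auto.
Qed.

Lemma XS_iter N n F : XS N F -> XS N (Nat.iter n (Dt 0) F).
Proof. intros H; induction n; simpl; auto. apply XS_Dt0; auto. Qed.

Lemma Dt_sig_zero N j G v : (0 < j < N)%nat -> List.Forall (fun I => length I = N) (supp G) ->
  fn (Dt j G) (sig N v) = 0.
Proof.
  intros Hj HG. simpl. apply sumL_zero. intros I HI. rewrite Forall_forall in HG.
  unfold sig. case_eq (xb N (incr j I)); intro E; [|ring].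
  exfalso. apply (not_xonly_incr N j I); auto. apply xonly_xb; auto.
Qed.

Definition Asig N (A : DF) : DF := mkDF (filter (xb N) (supp A)) (fun v => fn A (sig N v)).

Lemma Dt0_Asig N A v : fn (Dt 0 A) (sig N v) = fn (Dt 0 (Asig N A)) v.
Proof.
  change (sumL (supp A) (fun I => sig N v (incr 0 I) * pd I (fn A) (sig N v)) =
    sumL (filter (xb N) (supp A)) (fun I => v (incr 0 I) * pd I (fun w => fn A (sig N w)) v)). symmetry.
  rewrite (sumL_ext _ _ (fun I => sig N v (incr 0 I) * pd I (fn A) (sig N v))).
  - apply sumL_eq. intros I HI. rewrite filter_In. split; [tauto|]. intros H; split; auto.
    unfold sig in HI. case_eq (xb N (incr 0 I)); intro E; rewrite E in HI; [|lra].
    apply xonly_xb, (xonly_incr0_iff N), xonly_xb; auto.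
  - intros I HI. rewrite filter_In in HI. destruct HI as [_ HI].
    rewrite pd_sig, HI. unfold sig.
    rewrite (proj1 (xonly_xb N (incr 0 I))); auto. apply xonly_incr0, xonly_xb; auto.
Qed.

Lemma Lag_fn N p h j : fn (Lag N p h j) = fun v => fn p v * v (eMI N j) - fn h v.
Proof. reflexivity. Qed.

Lemma pd_Lag N p h j I : Good N (fn p) -> Good N (fn h) ->
  pd I (fn (Lag N p h j)) = fun v => pd I (fn p) v * v (eMI N j) + fn p v * (if MI_eq_dec (eMI N j) I then 1 else 0) - pd I (fn h) v.
Proof.
  intros Hp Hh. rewrite Lag_fn.
  rewrite (pd_sub N (fun v => fn p v * v (eMI N j)) (fn h)).
  rewrite (pd_mul N (fn p) (fun v => v (eMI N j))). rewrite pd_coord. reflexivity.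
  auto. apply G_coord. apply G_mul; auto. apply G_coord. auto.
Qed.

Lemma eMI_not_xonly N j : (0 < j < N)%nat -> ~ xonly N (eMI N j).
Proof. intros H. apply not_xonly_incr; auto. apply length_zeroMI. Qed.

Lemma sigma_part N Q p h i j A B :
  (0 < i < N)%nat -> (0 < j < N)%nat ->
  is_dfun N Q -> XS N Q -> is_dfun N p -> XS N p -> is_dfun N h -> XS N h ->
  is_dfun N A -> is_dfun N B ->
  (forall w, fn (prD Q (Lag N p h j)) w = fn (Dt 0 A) w + fn (Dt j B) w) ->
  forall v, fn (prD Q h) v = - fn (Dt 0 (Asig N A)) v.
Proof.
  intros Hi Hj HQ XQ Hp Xp Hh Xh HA HB Hs v.
  assert (WQ := WF_dfun N Q HQ). assert (Wp := WF_dfun N p Hp). assert (Wh := WF_dfun N h Hh).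
  specialize (Hs (sig N v)). rewrite (Dt_sig_zero N j B) in Hs by (auto; apply HB).
  rewrite Dt0_Asig, Rplus_0_r in Hs. rewrite <- Hs. clear Hs.
  enough (K : fn (prD Q (Lag N p h j)) (sig N v) = - fn (prD Q h) v) by lra.
  change (sumL ((supp p ++ eMI N j :: nil) ++ supp h) (fun I => fn (Dmulti I Q) (sig N v) * pd I (fn (Lag N p h j)) (sig N v))
    = - sumL (supp h) (fun I => fn (Dmulti I Q) v * pd I (fn h) v)).
  rewrite <- sumL_opp.
  set (t := fun I => - (fn (Dmulti I Q) v * pd I (fn h) v)).
  assert (Hnot : ~ In (eMI N j) (supp h)).
  { intros Hin. unfold XS in Xh; rewrite Forall_forall in Xh. apply (eMI_not_xonly N j); auto. }
  transitivity (sumL ((supp p ++ eMI N j :: nil) ++ supp h) t).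
  - apply sumL_ext. intros I HI. unfold t.
    destruct (MI_eq_dec I (eMI N j)) as [E|E].
    + subst I. rewrite Dmulti_e by lia. rewrite (Dt_sig_zero N j Q) by (auto; apply HQ).
      rewrite (pd_nodep (supp h) (fn h)) by (auto; apply Wh). ring.
    + assert (Xi : xonly N I).
      { unfold XS in Xp, Xh; rewrite Forall_forall in Xp, Xh.
        rewrite !in_app_iff in HI. simpl in HI. destruct HI as [[H|[H|H]]|H]; auto. congruence. tauto. }
      rewrite (pd_Lag N) by (apply Wp || apply Wh).
      destruct (MI_eq_dec (eMI N j) I) as [E'|E']; [congruence|].
      replace (sig N v (eMI N j)) with 0.
      2:{ unfold sig. case_eq (xb N (eMI N j)); intro X; auto. exfalso. apply (eMI_not_xonly N j); auto. apply xonly_xb; auto. }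
      rewrite (dep_x N (supp h) (pd I (fn h))) by (auto; apply dep_pd, Wh).
      rewrite (xonly_eq_ones N I) by (auto; lia). rewrite Dmulti_ones by lia.
      rewrite (dep_x N (supp (Nat.iter (ordMI I) (Dt 0) Q))); auto.
      ring. apply (WF_iter N); auto. apply XS_iter; auto.
  - apply sumL_eq. intros I HI. unfold t in HI.
    assert (In I (supp h)).
    { destruct (in_dec MI_eq_dec I (supp h)); auto. exfalso. apply HI.
      rewrite (pd_nodep (supp h) (fn h)); auto. ring. apply Wh. }
    rewrite !in_app_iff. tauto.
Qed.


Fixpoint Phi (a : nat) (f g : DF) : DF :=
  match a with
  | O => constDF 0
  | S a' => addDF (mulDF (constDF ((-1) ^ (S a'))) (mulDF g (Nat.iter a' (Dt 0) f))) (Phi a' f (Dt 0 g))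
  end.

Lemma WF_Phi N a f g : WF N f -> WF N g -> WF N (Phi a f g).
Proof.
  revert g; induction a; intros g Hf Hg; simpl. apply WF_const.
  apply WF_add. apply WF_mul. apply WF_const. apply WF_mul; auto. apply WF_iter; auto.
  apply IHa; auto. apply WF_Dt; auto.
Qed.

Lemma XS_Phi N a f g : XS N f -> XS N g -> XS N (Phi a f g).
Proof.
  revert g; induction a; intros g Hf Hg.
  - constructor.
  - unfold XS. change (supp (Phi (S a) f g)) with ((nil ++ (supp g ++ supp (Nat.iter a (Dt 0) f))) ++ supp (Phi a f (Dt 0 g))).
    apply List.Forall_app; split. apply List.Forall_app; split. constructor.
    apply List.Forall_app; split. exact Hg. apply (XS_iter N a f Hf).
    apply IHa; auto. apply (XS_Dt0 N g Hg).
Qed.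

Lemma green N a f g v : WF N f -> WF N g ->
  fn (Dt 0 (Phi a f g)) v = (-1) ^ a * fn g v * fn (Nat.iter a (Dt 0) f) v - fn f v * fn (Nat.iter a (Dt 0) g) v.
Proof.
  revert g; induction a; intros g Hf Hg.
  - simpl Phi. rewrite Dt_const_val. simpl. ring.
  - simpl Phi.
    rewrite (Dt_add_val N). 2: { apply WF_mul. apply WF_const. apply WF_mul; auto. apply WF_iter; auto. }
    2: { apply WF_Phi; auto. apply WF_Dt; auto. }
    rewrite (Dt_mul_val N). 2: apply WF_const. 2: { apply WF_mul; auto. apply WF_iter; auto. }
    rewrite (Dt_mul_val N 0 g). 2: auto. 2: apply WF_iter; auto.
    rewrite Dt_const_val. rewrite IHa; auto. 2: apply WF_Dt; auto.
    rewrite <- (@Nat.iter_succ_r a DF (Dt 0) g).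
    change (fn (Dt 0 (Nat.iter a (Dt 0) f)) v) with (fn (Nat.iter (S a) (Dt 0) f) v).
    simpl fn. simpl pow. ring.
Qed.

Lemma claim N i Qi v : WF N Qi ->
  (forall n, v (Nat.iter n (incr 0) (eMI N i)) = fn (Nat.iter n (Dt 0) Qi) v) ->
  forall m c n, WF N c ->
  fn (Nat.iter m (Dt 0) (mulDF c (coordF (Nat.iter n (incr 0) (eMI N i))))) v =
  fn (Nat.iter m (Dt 0) (mulDF c (Nat.iter n (Dt 0) Qi))) v.
Proof.
  intros HQ HU m. induction m; intros c n Hc.
  - simpl. rewrite HU. auto.
  - rewrite !Nat.iter_succ_r.
    rewrite (iter_ext N 0 m _ (addDF (mulDF (Dt 0 c) (coordF (Nat.iter n (incr 0) (eMI N i))))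
                                  (mulDF c (coordF (Nat.iter (S n) (incr 0) (eMI N i)))))).
    rewrite (iter_ext N 0 m (Dt 0 (mulDF c (Nat.iter n (Dt 0) Qi))) (addDF (mulDF (Dt 0 c) (Nat.iter n (Dt 0) Qi))
                                  (mulDF c (Nat.iter (S n) (Dt 0) Qi)))).
    rewrite !(iter_add N). rewrite !IHm; auto. apply WF_Dt; auto.
    + apply WF_mul. apply WF_Dt; auto. apply WF_iter; auto.
    + apply WF_mul; auto. apply WF_iter; auto.
    + apply WF_mul. apply WF_Dt; auto. apply WF_coord.
    + apply WF_mul; auto. apply WF_coord.
    + apply WF_Dt, WF_mul; auto. apply WF_iter; auto.
    + apply WF_add. apply WF_mul. apply WF_Dt; auto. apply WF_iter; auto. apply WF_mul; auto. apply WF_iter; auto.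
    + rewrite (Dt_mul_val N); auto. apply WF_iter; auto.
    + apply WF_Dt, WF_mul; auto. apply WF_coord.
    + apply WF_add. apply WF_mul. apply WF_Dt; auto. apply WF_coord. apply WF_mul; auto. apply WF_coord.
    + rewrite (Dt_mul_val N), Dt_coord_val; auto. apply WF_coord.
Qed.

Lemma fold_seq_zero g s n : (forall a, In a (seq s n) -> g a = 0) ->
  fold_right (fun a acc => g a + acc) 0 (seq s n) = 0.
Proof.
  revert s; induction n; intros s H; simpl; auto. rewrite H by (left; auto). rewrite IHn. ring.
  intros a Ha; apply H; right; auto.
Qed.

Lemma sumN_first M g : (forall a, (1 <= a)%nat -> g a = 0) -> sumN M g = g 0%nat.
Proof.
  intros H. unfold sumN. simpl. rewrite fold_seq_zero. ring.
  intros a Ha; apply in_seq in Ha; apply H; lia.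
Qed.

Lemma sumN_two M g : (1 <= M)%nat -> (forall b, (2 <= b)%nat -> g b = 0) -> sumN M g = g 0%nat + g 1%nat.
Proof.
  intros HM H. unfold sumN. destruct M; [lia|]. simpl. rewrite fold_seq_zero. ring.
  intros a Ha; apply in_seq in Ha; apply H; lia.
Qed.

Lemma sumN_ext M g g' : (forall a, (a <= M)%nat -> g a = g' a) -> sumN M g = sumN M g'.
Proof.
  intros H. unfold sumN. assert (H' : forall a, In a (seq 0 (S M)) -> g a = g' a).
  { intros a Ha; apply in_seq in Ha; apply H; lia. }
  induction (seq 0 (S M)); simpl; auto. rewrite H', IHl; auto. intros; apply H'; right; auto. left; auto.
Qed.

Lemma sumN_plus M g g' : sumN M (fun a => g a + g' a) = sumN M g + sumN M g'.
Proof. unfold sumN. induction (seq 0 (S M)); simpl; lra. Qed.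

Lemma sumN_minus M g g' : sumN M (fun a => g a - g' a) = sumN M g - sumN M g'.
Proof. unfold sumN. induction (seq 0 (S M)); simpl; lra. Qed.

Lemma sumN_scal M c g : sumN M (fun a => c * g a) = c * sumN M g.
Proof. unfold sumN. induction (seq 0 (S M)); simpl; lra. Qed.

Lemma ones_inj N a b : (0 < N)%nat -> ones N a = ones N b -> a = b.
Proof. intros H E. rewrite <- (ordMI_ones N a), <- (ordMI_ones N b), E; auto. Qed.

Lemma reindex N M Sl g : (0 < N)%nat ->
  (forall I, In I Sl -> xonly N I /\ (ordMI I <= M)%nat) ->
  (forall I, g I <> 0 -> In I Sl) ->
  sumN M (fun a => g (ones N a)) = sumL Sl g.
Proof.
  intros HN HS Hg. unfold sumN.
  transitivity (sumL (map (ones N) (seq 0 (S M))) g).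
  - unfold sumL. rewrite nodup_fixed_point.
    + clear. induction (seq 0 (S M)); simpl; auto. rewrite IHl; auto.
    + apply FinFun.Injective_map_NoDup. intros a b; apply ones_inj; auto. apply seq_NoDup.
  - apply sumL_eq. intros I HI. specialize (Hg I HI). split; auto.
    intros _. destruct (HS I Hg) as [X O]. rewrite (xonly_eq_ones N I) by auto.
    apply in_map, in_seq. lia.
Qed.

Lemma applyOp_zero N E G v : is_DOp N E ->
  (forall K, length K = N -> fn (Dmulti K G) v = 0) -> fn (applyOp E G) v = 0.
Proof.
  intros HE H. unfold is_DOp in HE. induction E as [|[K a] E IH]. reflexivity.
  inversion HE; subst. destruct H2 as [HK _]. simpl in HK.
  change (fn a v * fn (Dmulti K G) v + fn (applyOp E G) v = 0).
  rewrite H, IH; auto. ring.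
Qed.


Definition fa N p hi Qi (a : nat) : DF :=
  subDF (mulDF (pdF (ones N a) p) Qi) (pdF (ones N a) hi).

Lemma WF_Lag N p h i : WF N p -> WF N h -> WF N (Lag N p h i).
Proof. intros; unfold Lag. apply WF_sub; auto. apply WF_mul; auto. apply WF_coord. Qed.

Lemma ordMI_eMI N i : (i < N)%nat -> ordMI (eMI N i) = 1%nat.
Proof. intros H. unfold eMI. rewrite ordMI_incr, ordMI_zero; auto. rewrite length_zeroMI; auto. Qed.

Lemma nth_idx N i a b m : (0 < i < N)%nat ->
  nth m (Nat.iter a (incr 0) (Nat.iter b (incr i) (zeroMI N))) 0%nat =
  if Nat.eqb m 0 then a else if Nat.eqb m i then b else 0%nat.
Proof.
  intros H. rewrite nth_iter_incr by (rewrite length_iter_incr, length_zeroMI; lia).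
  rewrite nth_iter_incr by (rewrite length_zeroMI; lia). rewrite nth_zeroMI.
  destruct (Nat.eqb_spec m 0); destruct (Nat.eqb_spec m i); subst; lia.
Qed.

Lemma Dmulti_coord_sub_zero N Qi i v K : (0 < i < N)%nat -> WF N Qi -> length K = N ->
  v (incr i K) = fn (Dmulti K Qi) v ->
  fn (Dmulti K (subDF (coordF (eMI N i)) Qi)) v = 0.
Proof.
  intros Hi HQ HK Hs. unfold Dmulti in *. rewrite (Dmulti_aux_sub N); auto. 2: apply WF_coord.
  rewrite Dmulti_aux_coord. simpl. unfold eMI. rewrite sh_incr, sh_zero; auto. lra.
Qed.

Lemma EL_eval N p hi Qi E i v : (0 < i < N)%nat ->
  WF N p -> XS N p -> WF N hi -> XS N hi -> WF N Qi -> is_DOp N E ->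
  (forall w, varder N 0 i (Lag N p hi i) w = fn (applyOp E (subDF (coordF (eMI N i)) Qi)) w) ->
  (forall K, length K = N -> v (incr i K) = fn (Dmulti K Qi) v) ->
  sumN (maxord (Lag N p hi i)) (fun a => (-1) ^ a * fn (Nat.iter a (Dt 0) (fa N p hi Qi a)) v)
  = fn (Dt i p) v.
Proof.
  intros Hi Wp Xp Wh Xh WQ HE HEL HK.
  set (L := Lag N p hi i). assert (WL : WF N L) by (apply WF_Lag; auto).
  assert (Hvar : varder N 0 i L v = 0).
  { rewrite HEL. apply (applyOp_zero N); auto. intros K HKl.
    apply (Dmulti_coord_sub_zero N); auto. }
  assert (HU : forall n, v (Nat.iter n (incr 0) (eMI N i)) = fn (Nat.iter n (Dt 0) Qi) v).
  { intros n. unfold eMI. rewrite iter_incr_comm. rewrite HK.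
    change (Nat.iter n (incr 0) (zeroMI N)) with (ones N n). rewrite Dmulti_ones; auto. lia.
    rewrite length_iter_incr, length_zeroMI; auto. }
  assert (Xp' := Xp). assert (Xh' := Xh). unfold XS in Xp', Xh'. rewrite List.Forall_forall in Xp', Xh'.
  assert (HeL : In (eMI N i) (supp L)).
  { unfold L, Lag. simpl. rewrite !in_app_iff. simpl. tauto. }
  assert (Hep : ~ In (eMI N i) (supp p)) by (intro H; apply (eMI_not_xonly N i); auto).
  assert (Heh : ~ In (eMI N i) (supp hi)) by (intro H; apply (eMI_not_xonly N i); auto).
  set (term := fun a b => (-1) ^ (a + b) *
      fn (Nat.iter a (Dt 0) (Nat.iter b (Dt i) (pdF (Nat.iter a (incr 0) (Nat.iter b (incr i) (zeroMI N))) L))) v).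
  assert (Tz : forall a b, ((2 <= b)%nat \/ (b = 1 /\ 1 <= a)%nat) -> term a b = 0).
  { intros a b Hab. unfold term.
    assert (Hn : ~ In (Nat.iter a (incr 0) (Nat.iter b (incr i) (zeroMI N))) (supp L)).
    { intros Hin. unfold L, Lag in Hin. simpl in Hin. rewrite !in_app_iff in Hin. simpl in Hin.
      destruct Hin as [[H|[H|H]]|H].
      - destruct (Xp' _ H) as [_ X]. specialize (X i ltac:(lia)). rewrite nth_idx in X by lia.
        destruct (Nat.eqb_spec i 0); [lia|]. rewrite Nat.eqb_refl in X. lia.
      - assert (X1 := f_equal (fun I => nth 0 I 0%nat) H). assert (X2 := f_equal (fun I => nth i I 0%nat) H).
        simpl in X1, X2. rewrite nth_idx in X1, X2 by lia. unfold eMI in X1, X2.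
        rewrite nth_incr in X1, X2 by (rewrite length_zeroMI; lia). rewrite nth_zeroMI in X1, X2.
        simpl in X1. destruct (Nat.eqb_spec i 0); [lia|]. rewrite Nat.eqb_refl in X2.
        destruct i; [lia|]. simpl in X1. lia.
      - tauto.
      - destruct (Xh' _ H) as [_ X]. specialize (X i ltac:(lia)). rewrite nth_idx in X by lia.
        destruct (Nat.eqb_spec i 0); [lia|]. rewrite Nat.eqb_refl in X. lia. }
    assert (Z0 : fn (pdF (Nat.iter a (incr 0) (Nat.iter b (incr i) (zeroMI N))) L) = fun _ => 0).
    { apply functional_extensionality; intro w. simpl. apply (pd_nodep (supp L)); auto. apply WL. }
    rewrite (iter_zero_val N 0 a). ring. apply WF_iter, WF_pdF; auto.
    apply (iter_zero_val N); auto. apply WF_pdF; auto. }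
  assert (T01 : term 0%nat 1%nat = - fn (Dt i p) v).
  { unfold term. simpl Nat.iter.
    rewrite (Dt_ext N i _ p); auto. simpl pow. ring. apply WF_pdF; auto.
    change (pd (incr i (zeroMI N)) (fn L) = fn p). change (incr i (zeroMI N)) with (eMI N i).
    unfold L. rewrite (pd_Lag N) by (apply Wp || apply Wh).
    apply functional_extensionality; intro w.
    rewrite (pd_nodep (supp p) (fn p)), (pd_nodep (supp hi) (fn hi)); auto; try apply Wp; try apply Wh.
    destruct MI_eq_dec; [ring|congruence]. }
  assert (T0 : forall a, term a 0%nat = (-1) ^ a * fn (Nat.iter a (Dt 0) (fa N p hi Qi a)) v).
  { intros a. unfold term. rewrite Nat.add_0_r. f_equal. change (fn (Nat.iter a (Dt 0) (pdF (ones N a) L)) v = fn (Nat.iter a (Dt 0) (fa N p hi Qi a)) v).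
    assert (Wc : WF N (pdF (ones N a) p)) by (apply WF_pdF; auto).
    assert (Wg : WF N (pdF (ones N a) hi)) by (apply WF_pdF; auto).
    rewrite (iter_ext N 0 a _ (subDF (mulDF (pdF (ones N a) p) (coordF (eMI N i))) (pdF (ones N a) hi))).
    - rewrite (iter_sub N); auto. 2: apply WF_mul; auto; apply WF_coord.
      unfold fa. rewrite (iter_sub N); auto. 2: apply WF_mul; auto.
      change (eMI N i) with (Nat.iter 0 (incr 0) (eMI N i)).
      rewrite (claim N i Qi v WQ HU a _ 0%nat Wc). reflexivity.
    - apply WF_pdF; auto.
    - apply WF_sub; auto. apply WF_mul; auto. apply WF_coord.
    - change (pd (ones N a) (fn L) = fun w => pd (ones N a) (fn p) w * w (eMI N i) - pd (ones N a) (fn hi) w).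
      unfold L. rewrite (pd_Lag N) by (apply Wp || apply Wh).
      apply functional_extensionality; intro w. destruct MI_eq_dec as [E'|E'].
      + exfalso. apply (eMI_not_xonly N i); auto. rewrite E'. apply xonly_ones.
      + ring. }
  assert (HM : (1 <= maxord L)%nat).
  { rewrite <- (ordMI_eMI N i) by lia. apply maxord_ge; auto. }
  unfold varder in Hvar. cbv zeta in Hvar. fold L in Hvar.
  change (sumN (maxord L) (fun a => sumN (maxord L) (fun b => term a b)) = 0) in Hvar.
  rewrite (sumN_ext _ _ (fun a => term a 0%nat + term a 1%nat)) in Hvar.
  2: { intros a _. apply sumN_two; auto. }
  rewrite sumN_plus in Hvar. rewrite (sumN_first _ (fun a => term a 1%nat)) in Hvar.
  2: { intros a Ha; apply Tz; auto. }
  rewrite T01 in Hvar. rewrite (sumN_ext _ _ (fun a => term a 0%nat)).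
  lra. intros a _. rewrite T0. auto.
Qed.


Definition SumDF (l : list nat) (H : nat -> DF) : DF :=
  fold_right (fun a acc => addDF (H a) acc) (constDF 0) l.

Lemma WF_SumDF N l H : (forall a, WF N (H a)) -> WF N (SumDF l H).
Proof. intros W; induction l; simpl. apply WF_const. apply WF_add; auto. Qed.

Lemma XS_SumDF N l H : (forall a, XS N (H a)) -> XS N (SumDF l H).
Proof.
  intros W; induction l. constructor. unfold XS in *. change (supp (SumDF (a :: l) H)) with (supp (H a) ++ supp (SumDF l H)).
  apply List.Forall_app; split; auto; apply W.
Qed.

Lemma Dt_SumDF N l H v : (forall a, WF N (H a)) ->
  fn (Dt 0 (SumDF l H)) v = fold_right (fun a acc => fn (Dt 0 (H a)) v + acc) 0 l.
Proof.
  intros W; induction l. reflexivity.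
  change (fn (Dt 0 (addDF (H a) (SumDF l H))) v = fn (Dt 0 (H a)) v + fold_right (fun a acc => fn (Dt 0 (H a)) v + acc) 0 l).
  rewrite (Dt_add_val N); auto. rewrite IHl; auto. apply WF_SumDF; auto.
Qed.

Lemma WF_Asig N A : is_dfun N A -> WF N (Asig N A).
Proof.
  intros HA. split.
  - intros v w H. simpl. apply HA. intros I HI. unfold sig. case_eq (xb N I); intro E; auto.
    apply H. apply filter_In; auto.
  - apply (G_sig N (fn A)). apply (G_base N (supp A)). apply HA.
Qed.

Lemma XS_Asig N A : XS N (Asig N A).
Proof.
  unfold XS. simpl. apply List.Forall_forall. intros I HI. apply filter_In in HI. apply xonly_xb; tauto.
Qed.

Lemma Dt_Lag N p h i j v : WF N p -> WF N h ->
  fn (Dt i (Lag N p h j)) v = fn (Dt i p) v * v (eMI N j) + fn p v * v (incr i (eMI N j)) - fn (Dt i h) v.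
Proof.
  intros Wp Wh. unfold Lag. rewrite (Dt_sub_val N); auto. rewrite (Dt_mul_val N); auto.
  rewrite Dt_coord_val. reflexivity. apply WF_coord. apply WF_mul; auto. apply WF_coord.
Qed.

Lemma Dt_prD N Q i X v : XS N X -> on_shell N Q v -> (1 <= i < N)%nat ->
  fn (Dt i X) v = fn (prD (Q i) X) v.
Proof.
  intros Xx Hv Hi. change (sumL (supp X) (fun I => v (incr i I) * pd I (fn X) v) =
    sumL (supp X) (fun I => fn (Dmulti I (Q i)) v * pd I (fn X) v)).
  apply sumL_ext. intros I HI. unfold XS in Xx; rewrite List.Forall_forall in Xx.
  rewrite Hv; auto. apply Xx; auto.
Qed.

Lemma XS_dfun N F : XS N F -> List.Forall (fun I => length I = N) (supp F).
Proof. intros H. eapply List.Forall_impl; [|exact H]. intros I [HI _]; auto. Qed.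

Lemma WF_XS_dfun N F : WF N F -> XS N F -> is_dfun N F.
Proof.
  intros [Hd Hg] X. split. apply XS_dfun; auto. split. exact Hd. apply (good_smooth N); auto.
Qed.

Lemma prD_reindex N M Qj X v : (0 < N)%nat -> WF N X -> XS N X ->
  (forall I, In I (supp X) -> (ordMI I <= M)%nat) ->
  sumN M (fun a => fn (Nat.iter a (Dt 0) Qj) v * pd (ones N a) (fn X) v) = fn (prD Qj X) v.
Proof.
  intros HN WX Xx HM. change (fn (prD Qj X) v) with (sumL (supp X) (fun I => fn (Dmulti I Qj) v * pd I (fn X) v)).
  rewrite <- (reindex N M). apply sumN_ext. intros a _. rewrite Dmulti_ones; auto.
  auto. intros I HI. unfold XS in Xx; rewrite List.Forall_forall in Xx. split; auto.
  intros I HI. destruct (in_dec MI_eq_dec I (supp X)); auto. exfalso; apply HI.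
  rewrite (pd_nodep (supp X) (fn X)); auto. ring. apply WX.
Qed.


Theorem lemma1 (N : nat) (HN : (3 <= N)%nat)
  (Q : nat -> DF) (p : DF) (h : nat -> DF) (E : DOp) :
  (* Q_i, p, h_i smooth and depending only on u, u_1, u_11, ... *)
  (forall i, (1 <= i < N)%nat ->
     is_dfun N (Q i) /\ List.Forall (xonly N) (supp (Q i))) ->
  is_dfun N p -> List.Forall (xonly N) (supp p) ->
  (forall i, (1 <= i < N)%nat ->
     is_dfun N (h i) /\ List.Forall (xonly N) (supp (h i))) ->
  (* Euler-Lagrange equations are E_p (u_{t_i} - Q_i) = 0 *)
  is_DOp N E ->
  (forall i, (1 <= i < N)%nat -> forall v : J,
     varder N 0 i (Lag N p (h i) i) v
     = fn (applyOp E (subDF (coordF (eMI N i)) (Q i))) v) ->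
  (* the prolonged vector fields commute pairwise *)
  (forall i j, (1 <= i < N)%nat -> (1 <= j < N)%nat ->
     forall F : DF, is_dfun N F -> forall v : J,
       fn (prD (Q i) (prD (Q j) F)) v = fn (prD (Q j) (prD (Q i) F)) v) ->
  (* variational symmetries *)
  (forall i j, (1 <= i < N)%nat -> (1 <= j < N)%nat -> i <> j ->
     exists A B : DF, is_dfun N A /\ is_dfun N B /\
       forall v : J,
         fn (prD (Q i) (Lag N p (h j) j)) v = fn (Dt 0 A) v + fn (Dt j B) v) ->
  forall i j, (1 <= i < N)%nat -> (1 <= j < N)%nat -> i <> j ->
    exists F : DF, is_dfun N F /\ List.Forall (xonly N) (supp F) /\
      forall v : J, on_shell N Q v ->
        fn (Dt 0 F) v = fn (Dt i (Lag N p (h j) j)) v - fn (Dt j (Lag N p (h i) i)) v.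
Proof.
  intros HQ Hp Xp Hh HE HEL _ Hsym i j Hi Hj Hij.
  destruct (Hsym i j Hi Hj Hij) as [A [B [HA [HB HAB]]]].
  destruct (HQ i Hi) as [HQi XQi]. destruct (HQ j Hj) as [HQj XQj].
  destruct (Hh i Hi) as [Hhi Xhi]. destruct (Hh j Hj) as [Hhj Xhj].
  assert (WQi := WF_dfun N _ HQi). assert (WQj := WF_dfun N _ HQj).
  assert (Wp := WF_dfun N _ Hp). assert (Whi := WF_dfun N _ Hhi). assert (Whj := WF_dfun N _ Hhj).
  assert (Wfa : forall a, WF N (fa N p (h i) (Q i) a)).
  { intros a. unfold fa. apply WF_sub. apply WF_mul; auto. apply WF_pdF; auto. apply WF_pdF; auto. }
  assert (Xfa : forall a, XS N (fa N p (h i) (Q i) a)).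
  { intros a. unfold fa, XS. simpl. repeat (apply List.Forall_app; split); auto. }
  set (M := maxord (Lag N p (h i) i)).
  set (Psi := SumDF (seq 0 (S M)) (fun a => Phi a (fa N p (h i) (Q i) a) (Q j))).
  assert (WPsi : WF N Psi).
  { apply WF_SumDF. intros a. apply WF_Phi; auto. }
  assert (XPsi : XS N Psi).
  { apply XS_SumDF. intros a. apply XS_Phi; auto. }
  assert (WAs := WF_Asig N A HA).
  exists (addDF Psi (Asig N A)).
  assert (XF : XS N (addDF Psi (Asig N A))).
  { unfold XS; simpl. apply List.Forall_app; split; auto. apply XS_Asig. }
  split. apply WF_XS_dfun; auto. apply WF_add; auto.
  split. exact XF.
  intros v Hv.
  assert (Hsig := sigma_part N (Q i) p (h j) i j A B ltac:(lia) ltac:(lia) HQi XQi Hp Xp Hhj Xhj HA HB HAB v).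
  assert (HEL' := EL_eval N p (h i) (Q i) E i v ltac:(lia) Wp Xp Whi Xhi WQi HE (HEL i Hi)
     (fun K HK => Hv K HK i Hi)).
  fold M in HEL'.
  rewrite (Dt_add_val N); auto.
  unfold Psi. rewrite (Dt_SumDF N). 2: intros a; apply WF_Phi; auto.
  change (fold_right (fun a acc => fn (Dt 0 (Phi a (fa N p (h i) (Q i) a) (Q j))) v + acc) 0 (seq 0 (S M)))
    with (sumN M (fun a => fn (Dt 0 (Phi a (fa N p (h i) (Q i) a) (Q j))) v)).
  rewrite (sumN_ext M _ (fun a => fn (Q j) v * ((-1) ^ a * fn (Nat.iter a (Dt 0) (fa N p (h i) (Q i) a)) v)
      - (fn (Q i) v * (fn (Nat.iter a (Dt 0) (Q j)) v * pd (ones N a) (fn p) v)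
         - fn (Nat.iter a (Dt 0) (Q j)) v * pd (ones N a) (fn (h i)) v))).
  2: { intros a _. rewrite (green N); auto. unfold fa. simpl fn. ring. }
  rewrite sumN_minus, sumN_scal, sumN_minus, sumN_scal, HEL'.
  assert (Hsub : forall X I, (X = p \/ X = h i) -> In I (supp X) -> (ordMI I <= M)%nat).
  { intros X I HX HI. apply maxord_ge. unfold Lag; simpl. rewrite !in_app_iff.
    destruct HX; subst; tauto. }
  rewrite (prD_reindex N M (Q j) p v) by (auto; try lia; intros; apply (Hsub p); auto).
  rewrite (prD_reindex N M (Q j) (h i) v) by (auto; try lia; intros; apply (Hsub (h i)); auto).
  rewrite (Dt_Lag N p (h j) i j v), (Dt_Lag N p (h i) j i v); auto.
  rewrite (Dt_prD N Q i p v), (Dt_prD N Q i (h j) v), (Dt_prD N Q j p v), (Dt_prD N Q j (h i) v); auto.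
  rewrite (Dt_prD N Q i p v) in HEL'; auto.
  assert (Ej : v (eMI N j) = fn (Q j) v).
  { unfold eMI. rewrite Hv, Dmulti_zero; auto. apply length_zeroMI. }
  assert (Ei : v (eMI N i) = fn (Q i) v).
  { unfold eMI. rewrite Hv, Dmulti_zero; auto. apply length_zeroMI. }
  assert (Eij : incr i (eMI N j) = incr j (eMI N i)) by (unfold eMI; apply incr_comm).
  rewrite Ej, Ei, Eij, Hsig. ring.
Qed.
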